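(* Let $A\in\mathbb{R}^{n\times m}$, let $b\in\mathbb{R}^n$ be a nonzero vector in the span of the columns of $A$, and let $c, c'\in\mathbb{R}^m$ have strictly positive entries. For positive $s\in\mathbb{R}^m$ let $\mathcal{E}_s(b) = \min_{y\in\mathbb{R}^m:\, A y = b} \sum_{i=1}^m s_i y_i^2$, and write $1/c$ for the vector $(1/c_i)_i$. Let $\phi = (A\,\mathbf{D}(c)A^\top)^+ b$. Then \[ \frac{1}{\mathcal{E}_{1/c'}(b)} \geq \frac{1}{\mathcal{E}_{1/c}(b)} + \frac{1}{\mathcal{E}_{1/c}(b)^2} \cdot \sum_{i=1}^m c_i\, (A^\top \phi)_i^2 \left(1-\frac{c_i}{c'_i}\right). \]
   Context: For a vector $c$, $\mathbf{D}(c)$ is the diagonal matrix with diagonal $c$; $L^+$ denotes the Moore–Penrose pseudoinverse of a symmetric matrix $L$. *)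

(* Defs.v *)
From HB Require Import structures.
From mathcomp Require Import all_boot all_order all_algebra.
From mathcomp Require Import boolp classical_sets reals.
Set Implicit Arguments. Unset Strict Implicit. Unset Printing Implicit Defensive.
Import Order.TTheory GRing.Theory Num.Theory.
Local Open Scope ring_scope.
Local Open Scope classical_set_scope.

Definition penrose (R : realType) (n : nat) (L X : 'M[R]_n) : Prop :=
  [/\ L *m X *m L = L, X *m L *m X = X,
      (L *m X)^T = L *m X & (X *m L)^T = X *m L].

(* Moore-Penrose pseudoinverse L^+ (the unique matrix satisfying the Penrose
   conditions; chosen via xget, which picks it since it exists). *)
Definition mp_pinv (R : realType) (n : nat) (L : 'M[R]_n) : 'M[R]_n :=
  xget 0 [set X | penrose L X].

Definition Dg (R : realType) (m : nat) (c : 'cV[R]_m) : 'M[R]_m := diag_mx c^T.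

Definition vinv (R : realType) (m : nat) (c : 'cV[R]_m) : 'cV[R]_m :=
  \col_i (c i 0)^-1.

(* E_s(b) = min_{y : A y = b} sum_i s_i y_i^2 (taken as the infimum, which is
   attained when b is in the column span of A and s > 0). *)
Definition energy (R : realType) (n m : nat) (A : 'M[R]_(n, m))
    (s : 'cV[R]_m) (b : 'cV[R]_n) : R :=
  inf [set (\sum_(i < m) s i 0 * (y i 0) ^+ 2) | y in [set y : 'cV[R]_m | A *m y = b]].

(* Main.v *)
Require Import Defs.
From HB Require Import structures.
From mathcomp Require Import all_boot all_order all_algebra.
From mathcomp Require Import boolp classical_sets reals.
From mathcomp Require Import ring lra.
Import Order.TTheory GRing.Theory Num.Theory.
Set Implicit Arguments. Unset Strict Implicit.
Local Open Scope ring_scope.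

Section H.
Variable R : realType.

Lemma rv_sq0 k (v : 'rV[R]_k) : (v *m v^T) 0 0 = 0 -> v = 0.
Proof.
rewrite mxE => h.
have h' : \sum_j v 0 j ^+ 2 = 0.
  by rewrite -[RHS]h; apply: eq_bigr => j _; rewrite mxE expr2.
apply/rowP => j; rewrite mxE; apply/eqP; rewrite -sqrf_eq0; apply/eqP.
by apply: (psumr_eq0P _ h') => // i _; exact: sqr_ge0.
Qed.

Lemma gram_unit r k (M : 'M[R]_(r, k)) : row_free M -> M *m M^T \in unitmx.
Proof.
move=> hM; rewrite -row_free_unit -kermx_eq0.
apply/eqP/row_matrixP => i; rewrite row0.
set u := row i _.
have hu : u *m (M *m M^T) = 0 by apply/sub_kermxP; exact: row_sub.
have huM : u *m M = 0.
  apply: rv_sq0.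
  by rewrite trmx_mul mulmxA -(mulmxA u) hu mul0mx mxE.
by apply: (row_free_inj hM); rewrite /= huM mul0mx.
Qed.

Lemma penrose_fact n r (F : 'M[R]_(n, r)) (G : 'M[R]_(r, n)) :
  F^T *m F \in unitmx -> G *m G^T \in unitmx ->
  penrose (F *m G) (G^T *m invmx (G *m G^T) *m invmx (F^T *m F) *m F^T).
Proof.
move=> hF hG.
set P := invmx (F^T *m F); set Q := invmx (G *m G^T).
have hQ k (Y : 'M[R]_(k, r)) : Y *m G *m G^T *m Q = Y.
  transitivity (Y *m (G *m G^T *m Q)); first by rewrite !mulmxA.
  by rewrite mulmxV // mulmx1.
have hP k (Y : 'M[R]_(k, r)) : Y *m P *m F^T *m F = Y.
  transitivity (Y *m (P *m (F^T *m F))); first by rewrite !mulmxA.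
  by rewrite mulVmx // mulmx1.
have PT : P^T = P by rewrite /P trmx_inv trmx_mul trmxK.
have QT : Q^T = Q by rewrite /Q trmx_inv trmx_mul trmxK.
split.
- by rewrite !mulmxA hQ hP.
- by rewrite !mulmxA hP hQ.
- by rewrite !mulmxA hQ !trmx_mul trmxK PT mulmxA.
- by rewrite !mulmxA hP !trmx_mul trmxK QT mulmxA.
Qed.

Lemma pinv_exists n (L : 'M[R]_n) : exists X, penrose L X.
Proof.
rewrite -(mulmx_base L); eexists; apply: penrose_fact.
- rewrite -[X in _ *m X]trmxK; apply: gram_unit.
  by rewrite /row_free mxrank_tr; exact: col_base_full.
- by apply: gram_unit; exact: row_base_free.
Qed.

Lemma mp_pinvP n (L : 'M[R]_n) : penrose L (mp_pinv L).
Proof. by rewrite /mp_pinv; have [X hX] := pinv_exists L; apply: (xgetPex 0 (P := [set X | penrose L X])); exists X. Qed.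

Lemma dotE m (u v : 'cV[R]_m) : \sum_i u i 0 * v i 0 = (u^T *m v) 0 0.
Proof. by rewrite mxE; apply: eq_bigr => i _; rewrite mxE. Qed.

Lemma dotA n m (A : 'M[R]_(n, m)) (w : 'cV[R]_n) (y : 'cV[R]_m) :
  \sum_i (A^T *m w) i 0 * y i 0 = \sum_k w k 0 * (A *m y) k 0.
Proof. by rewrite !dotE trmx_mul trmxK mulmxA. Qed.

Lemma quad_bound m (d u y : 'cV[R]_m) : (forall i, 0 < d i 0) ->
  2 * (\sum_i u i 0 * y i 0) - \sum_i d i 0 * u i 0 ^+ 2
  <= \sum_i vinv d i 0 * y i 0 ^+ 2.
Proof.
move=> hd; rewrite mulr_sumr -sumrB; apply: ler_sum => i _.
rewrite mxE; have di := hd i.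
rewrite -subr_ge0.
have -> : (d i 0)^-1 * y i 0 ^+ 2 - (2 * (u i 0 * y i 0) - d i 0 * u i 0 ^+ 2)
   = (d i 0)^-1 * (y i 0 - d i 0 * u i 0) ^+ 2.
  by field; rewrite gt_eqF.
by apply: mulr_ge0; [rewrite invr_ge0; exact: ltW | exact: sqr_ge0].
Qed.

Lemma energy_le n m (A : 'M[R]_(n, m)) (d y : 'cV[R]_m) (b : 'cV[R]_n) : (forall i, 0 < d i 0) ->
  A *m y = b -> energy A (vinv d) b <= \sum_i vinv d i 0 * y i 0 ^+ 2.
Proof.
move=> hd hy; apply: ge_inf; last by exists y.
exists 0 => _ [z _ <-]; apply: sumr_ge0 => i _.
by rewrite mxE; apply: mulr_ge0; [rewrite invr_ge0; exact: ltW | exact: sqr_ge0].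
Qed.

Lemma energy_ge n m (A : 'M[R]_(n, m)) (d : 'cV[R]_m) (b : 'cV[R]_n) (v : R) :
  (exists y, A *m y = b) ->
  (forall y, A *m y = b -> v <= \sum_i vinv d i 0 * y i 0 ^+ 2) ->
  v <= energy A (vinv d) b.
Proof.
move=> [y0 hy0] H; apply: lb_le_inf.
  by exists (\sum_i vinv d i 0 * y0 i 0 ^+ 2); exists y0.
by move=> _ [y hy <-]; exact: H.
Qed.

Lemma energy_pos n m (A : 'M[R]_(n, m)) (d : 'cV[R]_m) (b : 'cV[R]_n) :
  b != 0 -> (exists y, A *m y = b) -> (forall i, 0 < d i 0) ->
  0 < energy A (vinv d) b.
Proof.
move=> hb0 hsp hd.
set B := \sum_k b k 0 ^+ 2.
set K := \sum_i d i 0 * (A^T *m b) i 0 ^+ 2.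
have B0 : 0 < B.
  rewrite lt0r sumr_ge0 ?andbT; last by move=> i _; exact: sqr_ge0.
  apply/eqP => hB; move/eqP: hb0; apply.
  rewrite -[b]trmxK (@rv_sq0 _ (b^T)) ?trmx0 //.
  by rewrite trmxK -dotE -[RHS]hB; apply: eq_bigr => i _; rewrite expr2.
have K0 : 0 <= K.
  by apply: sumr_ge0 => i _; apply: mulr_ge0; [exact: ltW | exact: sqr_ge0].
have KB : 0 < K + B by lra.
set t := B / (K + B).
have t0 : 0 < t by rewrite divr_gt0.
have tK : t * K <= B.
  rewrite /t mulrAC ler_pdivrMr // mulrDr lerDl.
  by apply: mulr_ge0; exact: ltW.
apply: (@lt_le_trans _ _ (t * B)); first by rewrite mulr_gt0.
apply: energy_ge => // y hy.
apply: le_trans (quad_bound (t *: (A^T *m b)) y hd).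
have -> : \sum_i (t *: (A^T *m b)) i 0 * y i 0 = t * B.
  rewrite (eq_bigr (fun i => t * ((A^T *m b) i 0 * y i 0))); last first.
    by move=> i _; rewrite mxE mulrA.
  rewrite -mulr_sumr dotA hy; congr (_ * _); apply: eq_bigr => i _; rewrite expr2.
have -> : \sum_i d i 0 * (t *: (A^T *m b)) i 0 ^+ 2 = t * (t * K).
  rewrite !mulr_sumr; apply: eq_bigr => i _; rewrite mxE; ring.
have : t * (t * K) <= t * B by rewrite ler_pM2l.
lra.
Qed.

End H.

Theorem lemma4p4 (R : realType) (n m : nat) (A : 'M[R]_(n, m)) (b : 'cV[R]_n)
    (c c' : 'cV[R]_m)
    (hb0 : b != 0) (hbspan : exists y : 'cV[R]_m, A *m y = b)
    (hc : forall i, 0 < c i 0) (hc' : forall i, 0 < c' i 0) :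
  let phi := mp_pinv (A *m Dg c *m A^T) *m b in
  let Ec := energy A (vinv c) b in
  let Ec' := energy A (vinv c') b in
  1 / Ec + 1 / Ec ^+ 2 *
    (\sum_(i < m) c i 0 * ((A^T *m phi) i 0) ^+ 2 * (1 - c i 0 / c' i 0))
  <= 1 / Ec'.
Proof.
cbv zeta.
have [y0 hy0] := hbspan.
set L := A *m Dg c *m A^T.
have [h1 _ _ _] := mp_pinvP L.
set X := mp_pinv L in h1 *.
set phi := X *m b.
set Ec := energy A (vinv c) b.
set Ec' := energy A (vinv c') b.
have LXb : L *m (X *m b) = b.
  have PL : (1%:M - L *m X) *m L = 0 by rewrite mulmxBl mul1mx h1 subrr.
  set N := (1%:M - L *m X) *m A.
  have hN : N *m Dg c *m N^T = 0.
    have e : (1%:M - L *m X) *m A *m Dg c *m A^T = (1%:M - L *m X) *m L.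
      by rewrite /L !mulmxA.
    by rewrite /N trmx_mul !mulmxA e PL !mul0mx.
  have N0 : N = 0.
    apply/matrixP => j i; rewrite [RHS]mxE.
    have e : (N *m Dg c *m N^T) j j = \sum_k c k 0 * N j k ^+ 2.
      by rewrite mxE; apply: eq_bigr => k _; rewrite /Dg mul_mx_diag !mxE; ring.
    have h : \sum_k c k 0 * N j k ^+ 2 = 0 by rewrite -e hN mxE.
    have := psumr_eq0P (fun k _ => mulr_ge0 (ltW (hc k)) (sqr_ge0 (N j k))) h (i := i) isT.
    by move/eqP; rewrite mulf_eq0 gt_eqF //= sqrf_eq0 => /eqP.
  have PA : L *m X *m A = A.
    by move: N0; rewrite /N mulmxBl mul1mx => /subr0_eq hA; exact: esym hA.
  by rewrite mulmxA -hy0 mulmxA PA.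
set g := A^T *m phi.
set ys := Dg c *m g.
have hys : A *m ys = b.
  by move: LXb; rewrite /ys /g /phi /L !mulmxA.
have ysE i : ys i 0 = c i 0 * g i 0 by rewrite /ys /Dg mul_diag_mx !mxE.
set G := \sum_i c i 0 * g i 0 ^+ 2.
have hG : G = \sum_k phi k 0 * b k 0.
  transitivity (\sum_i g i 0 * ys i 0).
    by apply: eq_bigr => i _; rewrite ysE; ring.
  by rewrite /g dotA hys.
have EG : G <= Ec.
  apply: energy_ge => // y hy.
  apply: le_trans (quad_bound g y hc).
  rewrite /g dotA hy -hG -/g -/G; lra.
set H := \sum_i vinv c' i 0 * ys i 0 ^+ 2.
have EH : Ec' <= H by apply: energy_le.
have hS : \sum_i c i 0 * g i 0 ^+ 2 * (1 - c i 0 / c' i 0) = G - H.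
  rewrite /G /H -sumrB; apply: eq_bigr => i _; idtac.
  by rewrite ysE [vinv c' i 0]mxE; field; rewrite gt_eqF.
rewrite hS.
have E0 : 0 < Ec by apply: energy_pos.
have E0' : 0 < Ec' by apply: energy_pos.
have step1 : 1 / Ec ^+ 2 * (G - H) <= 1 / Ec ^+ 2 * (Ec - Ec').
  by rewrite ler_pM2l ?divr_gt0 ?exprn_gt0 //; lra.
apply: le_trans (lerD (lexx _) step1) _.
rewrite -subr_ge0.
have -> : 1 / Ec' - (1 / Ec + 1 / Ec ^+ 2 * (Ec - Ec'))
   = (Ec - Ec') ^+ 2 / (Ec' * Ec ^+ 2).
  by field; rewrite !gt_eqF.
by rewrite divr_ge0 ?sqr_ge0 // mulr_ge0 // ?ltW // exprn_gt0.
Qed.
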